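(* Let $m,n\ge 1$ be integers, let $r_b,r_w\ge 0$, and let $R_{th0}>0$ satisfy $R_{th0}>m r_b+n r_w$. Write $d_{ij}=i r_b+j r_w$ for $1\le i\le m$, $1\le j\le n$. Consider the equation in the unknown $R> m r_b + n r_w$: $$\ln(R_{th0})=\frac{1}{mn}\sum_{i=1}^{m}\sum_{j=1}^{n}\ln\big(R-d_{ij}\big). \qquad (\ast)$$ Define the sequence $(R^{(l)})_{l\ge 0}$ by $R^{(0)}=R_{th0}$ and, for $l\ge 1$, $$\ln\big(R^{(l)}\big)=\ln(R_{th0})-\frac{1}{mn}\sum_{i=1}^{m}\sum_{j=1}^{n}\ln\Big(1-\frac{d_{ij}}{R^{(l-1)}}\Big).$$ Then every $R^{(l)}$ is well defined (i.e. $R^{(l)}>m r_b+n r_w$), equation $(\ast)$ has a solution $R_{th\_array}$ in $(m r_b+n r_w,\infty)$, and the sequence $R^{(l)}$ converges to $R_{th\_array}$ as $l\to\infty$.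
   Context: This iteration is called the STMC threshold solver algorithm in the paper (iterate until a fixed number of iterations or until successive iterates differ by at most a tolerance $\epsilon$). Here $R_{th0}$ plays the role of the optimal read resistance threshold in the absence of line resistance, $r_b$ and $r_w$ are the per-junction bitline and wordline resistances, and $(\ast)$ is the equation defining the common read threshold $R_{th\_array}$ for an $m\times n$ crossbar array. *)

(* Defs.v *)
From Stdlib Require Import Reals.
From Coquelicot Require Import Coquelicot.
Open Scope R_scope.

Definition dij (rb rw : R) (i j : nat) : R := INR i * rb + INR j * rw.

Definition avg2 (m n : nat) (f : nat -> nat -> R) : R :=
  / (INR m * INR n) * sum_n_m (fun i => sum_n_m (fun j => f i j) 1 n) 1 m.

Definition stmc_step (m n : nat) (rb rw Rth0 Rprev : R) : R :=
  exp (ln Rth0 - avg2 m n (fun i j => ln (1 - dij rb rw i j / Rprev))).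

Fixpoint stmc_seq (m n : nat) (rb rw Rth0 : R) (l : nat) : R :=
  match l with
  | O => Rth0
  | S l' => stmc_step m n rb rw Rth0 (stmc_seq m n rb rw Rth0 l')
  end.

(* Main.v *)
Require Import Defs.
From Stdlib Require Import Reals.
From Coquelicot Require Import Coquelicot.
Open Scope R_scope.
From Stdlib Require Import Lra Lia Arith.

Lemma nondecr_deriv (f df : R -> R) (a b : R) :
  (forall x, a <= x <= b -> is_derive f x (df x)) ->
  (forall x, a <= x <= b -> 0 <= df x) ->
  a <= b -> f a <= f b.
Proof.
  intros Hd Hpos Hab.
  destruct (Req_dec a b) as [->|Hne]; [lra|].
  destruct (MVT_gen f a b df) as [c [Hc Heq]].
  - intros x Hx. apply Hd. rewrite Rmin_left in Hx by lra. rewrite Rmax_right in Hx by lra. lra.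
  - intros x Hx. rewrite Rmin_left in Hx by lra. rewrite Rmax_right in Hx by lra.
    apply continuity_pt_filterlim. apply (ex_derive_continuous f x).
    exists (df x). apply Hd. lra.
  - rewrite Rmin_left in Hc by lra. rewrite Rmax_right in Hc by lra.
    assert (0 <= df c) by (apply Hpos; lra).
    assert (0 <= df c * (b - a)) by (apply Rmult_le_pos; lra). lra.
Qed.

Lemma ln_le_m1 (u : R) : 0 < u -> ln u <= u - 1.
Proof.
  intros Hu. assert (H := exp_ineq1_le (ln u)). rewrite exp_ln in H; lra.
Qed.

Lemma C1 (z1 z2 : R) : 0 < z1 -> z1 <= z2 -> z2 < 1 ->
  (1 - z1) * ln (1 - z1) / z1 <= (1 - z2) * ln (1 - z2) / z2.
Proof.
  intros H1 H2 H3.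
  apply (nondecr_deriv (fun z => (1 - z) * ln (1 - z) / z) (fun z => (-z - ln (1-z))/ z^2) z1 z2); try lra.
  - intros z Hz. auto_derive. lra.
    replace (1 + - z) with (1 - z) by ring. field. lra.
  - intros z Hz. apply Rmult_le_pos.
    + assert (H := ln_le_m1 (1 - z) ltac:(lra)). lra.
    + apply Rlt_le, Rinv_0_lt_compat. apply pow_lt. lra.
Qed.

Lemma C3 (z1 z2 : R) : 0 < z1 -> z1 <= z2 -> z2 < 1 ->
  ln (1 - z2) / z2 <= ln (1 - z1) / z1.
Proof.
  intros H1 H2 H3.
  cut (- (ln (1 - z1) / z1) <= - (ln (1 - z2) / z2)); [lra|].
  apply (nondecr_deriv (fun z => - (ln (1 - z) / z)) (fun z => (z / (1 - z) + ln (1-z))/ z^2) z1 z2); try lra.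
  - intros z Hz. auto_derive. lra.
    replace (1 + - z) with (1 - z) by ring. field. lra.
  - intros z Hz. apply Rmult_le_pos.
    + assert (H := ln_le_m1 (/ (1 - z)) ltac:(apply Rinv_0_lt_compat; lra)).
      rewrite ln_Rinv in H by lra.
      assert (/ (1 - z) - 1 = z / (1 - z)) by (field; lra). lra.
    + apply Rlt_le, Rinv_0_lt_compat. apply pow_lt. lra.
Qed.

Lemma C4 (s t : R) : 1/2 <= s -> s <= t -> t < 1 ->
  ln t * ln (1 - t) <= ln s * ln (1 - s).
Proof.
  intros H1 H2 H3.
  cut (- (ln s * ln (1 - s)) <= - (ln t * ln (1 - t))); [lra|].
  apply (nondecr_deriv (fun u => - (ln u * ln (1 - u)))
           (fun u => ln u / (1 - u) - ln (1 - u) / u) s t); try lra.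
  - intros z Hz. auto_derive. lra.
    replace (1 + - z) with (1 - z) by ring. field. lra.
  - intros z Hz.
    assert (H := C3 (1 - z) z ltac:(lra) ltac:(lra) ltac:(lra)).
    replace (1 - (1 - z)) with z in H by ring. lra.
Qed.

Lemma ln_neg (u : R) : 0 < u < 1 -> ln u < 0.
Proof. intros H. rewrite <- ln_1. apply ln_increasing; lra. Qed.

Lemma C2 (x y d D : R) : 0 < x -> x < y -> 0 <= d -> d <= D -> D * y < 1 ->
  ln (1 - d * y) * ln (1 - D * x) <= ln (1 - d * x) * ln (1 - D * y).
Proof.
  intros Hx Hxy Hd HdD HDy.
  destruct (Req_dec d 0) as [->|Hd0].
  { rewrite !Rmult_0_l, Rminus_0_r, ln_1. lra. }
  assert (Hdp : 0 < d) by lra.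
  assert (Hty : forall t, 0 < t <= D -> 0 < t * x < 1 /\ 0 < t * y < 1 /\ t * x < t * y).
  { intros t Ht. assert (t * y <= D * y) by (apply Rmult_le_compat_r; lra).
    assert (t * x < t * y) by (apply Rmult_lt_compat_l; lra).
    split; [split|split; [split|]]; try lra; apply Rmult_lt_0_compat; lra. }
  assert (Hr : ln (1 - d * y) / ln (1 - d * x) <= ln (1 - D * y) / ln (1 - D * x)).
  { apply (nondecr_deriv (fun t => ln (1 - t * y) / ln (1 - t * x))
      (fun t => ((- y / (1 - t * y)) * ln (1 - t * x) - ln (1 - t * y) * (- x / (1 - t * x)))
                 / (ln (1 - t * x))^2) d D); try lra.
    - intros t Ht. destruct (Hty t ltac:(lra)) as [H1 [H2 H3]].
      assert (ln (1 - t * x) < 0) by (apply ln_neg; lra).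
      assert (Hne : ln (1 - t * x) <> 0) by (apply Rlt_not_eq; exact H).
      auto_derive. { repeat split; try lra; exact Hne. }
      replace (1 + - (t * x)) with (1 - t * x) by ring.
      replace (1 + - (t * y)) with (1 - t * y) by ring.
      field. repeat split; try lra; exact Hne.
    - intros t Ht. destruct (Hty t ltac:(lra)) as [H1 [H2 H3]].
      assert (HP : ln (1 - t * x) < 0) by (apply ln_neg; lra).
      assert (HC := C1 (t * x) (t * y) ltac:(lra) ltac:(lra) ltac:(lra)).
      apply Rmult_le_pos; [| apply Rlt_le, Rinv_0_lt_compat; simpl; nra].
      set (P := ln (1 - t * x)) in *. set (Q := ln (1 - t * y)) in *.
      assert (E : - y / (1 - t * y) * P - Q * (- x / (1 - t * x)) =
        (x * y * t / ((1 - t * x) * (1 - t * y))) *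
        ((1 - t * y) * Q / (t * y) - (1 - t * x) * P / (t * x))).
      { field. repeat split; try lra. }
      rewrite E. apply Rmult_le_pos; [|lra].
      apply Rmult_le_pos.
      + assert (0 < t) by lra. assert (0 < x * y) by nra. nra.
      + apply Rlt_le, Rinv_0_lt_compat. apply Rmult_lt_0_compat; lra. }
  destruct (Hty d ltac:(lra)) as [H1 [H2 H3]].
  destruct (Hty D ltac:(lra)) as [H4 [H5 H6]].
  assert (Hp : ln (1 - d * x) < 0) by (apply ln_neg; lra).
  assert (HP : ln (1 - D * x) < 0) by (apply ln_neg; lra).
  set (p := ln (1 - d * x)) in *. set (P := ln (1 - D * x)) in *.
  set (q := ln (1 - d * y)) in *. set (Q := ln (1 - D * y)) in *.
  assert (E1 : q = (q / p) * p) by (field; lra).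
  assert (E2 : Q = (Q / P) * P) by (field; lra).
  rewrite E1, E2.
  assert (0 < p * P) by nra.
  assert ((q / p) * (p * P) <= (Q / P) * (p * P)) by (apply Rmult_le_compat_r; lra).
  replace (q / p * p * P) with (q / p * (p * P)) by ring.
  replace (p * (Q / P * P)) with (Q / P * (p * P)) by ring. lra.
Qed.

Lemma sum_le_rng (a b : nat -> R) (p q : nat) :
  (forall k, (p <= k <= q)%nat -> a k <= b k) -> sum_n_m a p q <= sum_n_m b p q.
Proof.
  induction q as [|q IH]; intros H.
  - destruct p as [|p].
    + rewrite !sum_n_n. apply H. lia.
    + rewrite !sum_n_m_zero by lia. lra.
  - destruct (le_lt_dec p (S q)) as [Hp|Hp].
    + destruct (Nat.eq_dec p (S q)) as [->|Hne].
      * rewrite !sum_n_n. apply H. lia.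
      * rewrite !sum_n_Sm by lia. unfold plus; simpl.
        assert (sum_n_m a p q <= sum_n_m b p q) by (apply IH; intros; apply H; lia).
        assert (a (S q) <= b (S q)) by (apply H; lia). lra.
    + rewrite !sum_n_m_zero by lia. lra.
Qed.

Lemma sum_lt_rng (a b : nat -> R) (p q : nat) : (p <= q)%nat ->
  (forall k, (p <= k <= q)%nat -> a k < b k) -> sum_n_m a p q < sum_n_m b p q.
Proof.
  induction q as [|q IH]; intros Hpq H.
  - assert (p = 0)%nat by lia. subst. rewrite !sum_n_n. apply H. lia.
  - destruct (Nat.eq_dec p (S q)) as [->|Hne].
    + rewrite !sum_n_n. apply H. lia.
    + rewrite !sum_n_Sm by lia. unfold plus; simpl.
      assert (sum_n_m a p q < sum_n_m b p q) by (apply IH; [lia|intros; apply H; lia]).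
      assert (a (S q) < b (S q)) by (apply H; lia). lra.
Qed.

Lemma sum_plus_R (a b : nat -> R) p q :
  sum_n_m (fun k => a k + b k) p q = sum_n_m a p q + sum_n_m b p q.
Proof. apply (sum_n_m_plus a b p q). Qed.

Lemma sum_scal_R (c : R) (a : nat -> R) p q :
  sum_n_m (fun k => c * a k) p q = c * sum_n_m a p q.
Proof. apply (sum_n_m_mult_l c a p q). Qed.

Lemma sum_ext_rng (a b : nat -> R) p q :
  (forall k, (p <= k <= q)%nat -> a k = b k) -> sum_n_m a p q = sum_n_m b p q.
Proof. intros H. apply sum_n_m_ext_loc. exact H. Qed.

Section A.
Variables m n : nat.
Hypothesis hm : (1 <= m)%nat.
Hypothesis hn : (1 <= n)%nat.

Lemma N_pos : 0 < INR m * INR n.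
Proof. apply Rmult_lt_0_compat; apply lt_0_INR; lia. Qed.

Lemma avg2_le (F G : nat -> nat -> R) :
  (forall i j, (1 <= i <= m)%nat -> (1 <= j <= n)%nat -> F i j <= G i j) ->
  avg2 m n F <= avg2 m n G.
Proof.
  intros H. unfold avg2. apply Rmult_le_compat_l.
  - apply Rlt_le, Rinv_0_lt_compat, N_pos.
  - apply sum_le_rng. intros i Hi. apply sum_le_rng. intros j Hj. apply H; lia.
Qed.

Lemma avg2_lt (F G : nat -> nat -> R) :
  (forall i j, (1 <= i <= m)%nat -> (1 <= j <= n)%nat -> F i j < G i j) ->
  avg2 m n F < avg2 m n G.
Proof.
  intros H. unfold avg2. apply Rmult_lt_compat_l.
  - apply Rinv_0_lt_compat, N_pos.
  - apply sum_lt_rng; [lia|]. intros i Hi. apply sum_lt_rng; [lia|]. intros j Hj. apply H; lia.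
Qed.

Lemma avg2_plus (F G : nat -> nat -> R) :
  avg2 m n (fun i j => F i j + G i j) = avg2 m n F + avg2 m n G.
Proof.
  unfold avg2. rewrite <- Rmult_plus_distr_l. f_equal.
  rewrite <- sum_plus_R. apply sum_n_m_ext. intros i. apply sum_plus_R.
Qed.

Lemma avg2_scal (c : R) (F : nat -> nat -> R) :
  avg2 m n (fun i j => c * F i j) = c * avg2 m n F.
Proof.
  unfold avg2.
  rewrite (sum_n_m_ext (fun i => sum_n_m (fun j => c * F i j) 1 n) (fun i => c * sum_n_m (fun j => F i j) 1 n)).
  2: { intros i. apply sum_scal_R. }
  rewrite sum_scal_R. ring.
Qed.

Lemma avg2_const (c : R) : avg2 m n (fun _ _ => c) = c.
Proof.
  unfold avg2. rewrite (sum_n_m_ext (fun i => sum_n_m (fun _ => c) 1 n) (fun _ => INR n * c)).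
  2: { intros i. rewrite sum_n_m_const. f_equal. f_equal. lia. }
  rewrite sum_n_m_const. replace (S m - 1)%nat with m by lia.
  assert (0 < INR m) by (apply lt_0_INR; lia). assert (0 < INR n) by (apply lt_0_INR; lia).
  field. split; lra.
Qed.

Lemma avg2_ext (F G : nat -> nat -> R) :
  (forall i j, (1 <= i <= m)%nat -> (1 <= j <= n)%nat -> F i j = G i j) ->
  avg2 m n F = avg2 m n G.
Proof.
  intros H. unfold avg2. f_equal. apply sum_ext_rng. intros i Hi. apply sum_ext_rng.
  intros j Hj. apply H; lia.
Qed.

End A.

Lemma exp_le' (x y : R) : x <= y -> exp x <= exp y.
Proof. intros [H|H]; [apply Rlt_le, exp_increasing; exact H| subst; lra]. Qed.

Lemma cont_of_deriv (g : R -> R) (x l : R) : is_derive g x l -> continuity_pt g x.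
Proof. intros H. apply derivable_continuous_pt. exists l. apply is_derive_Reals. exact H. Qed.

Lemma sum_lim (a : nat -> nat -> R) (b : nat -> R) (p q : nat) :
  (forall k, (p <= k <= q)%nat -> is_lim_seq (fun l => a l k) (b k)) ->
  is_lim_seq (fun l => sum_n_m (a l) p q) (sum_n_m b p q).
Proof.
  induction q as [|q IH]; intros H.
  - destruct p as [|p].
    + rewrite sum_n_n. apply (is_lim_seq_ext (fun l => a l 0%nat)).
      { intros l. rewrite sum_n_n. reflexivity. }
      apply H. lia.
    + rewrite sum_n_m_zero by lia. apply (is_lim_seq_ext (fun _ => 0)).
      { intros l. rewrite sum_n_m_zero by lia. reflexivity. } apply is_lim_seq_const.
  - destruct (le_lt_dec p (S q)) as [Hp|Hp].
    + destruct (Nat.eq_dec p (S q)) as [->|Hne].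
      * rewrite sum_n_n. apply (is_lim_seq_ext (fun l => a l (S q))).
        { intros l. rewrite sum_n_n. reflexivity. }
        apply H. lia.
      * rewrite sum_n_Sm by lia.
        apply (is_lim_seq_ext (fun l => sum_n_m (a l) p q + a l (S q))).
        { intros l. rewrite sum_n_Sm by lia. reflexivity. }
        apply is_lim_seq_plus'. apply IH. intros; apply H; lia. apply H; lia.
    + rewrite sum_n_m_zero by lia. apply (is_lim_seq_ext (fun _ => 0)).
      { intros l. rewrite sum_n_m_zero by lia. reflexivity. } apply is_lim_seq_const.
Qed.

Lemma avg2_lim (m n : nat) (F : nat -> nat -> nat -> R) (G : nat -> nat -> R) :
  (forall i j, (1 <= i <= m)%nat -> (1 <= j <= n)%nat -> is_lim_seq (fun l => F l i j) (G i j)) ->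
  is_lim_seq (fun l => avg2 m n (F l)) (avg2 m n G).
Proof.
  intros H. unfold avg2.
  assert (H2 := is_lim_seq_scal_l (fun l => sum_n_m (fun i => sum_n_m (fun j => F l i j) 1 n) 1 m)
     (/ (INR m * INR n)) (sum_n_m (fun i => sum_n_m (fun j => G i j) 1 n) 1 m)).
  simpl in H2. apply H2.
  apply (sum_lim (fun l i => sum_n_m (fun j => F l i j) 1 n)). intros i Hi.
  apply (sum_lim (fun l j => F l i j)). intros j Hj. apply H; lia.
Qed.

Section Main.
Variables (m n : nat) (rb rw Rth0 : R).
Hypotheses (hm : (1 <= m)%nat) (hn : (1 <= n)%nat)
  (hrb : 0 <= rb) (hrw : 0 <= rw)
  (hR0 : 0 < Rth0) (hR0d : INR m * rb + INR n * rw < Rth0).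

Definition DD := INR m * rb + INR n * rw.
Definition ff (R : R) := stmc_step m n rb rw Rth0 R.
Definition c0 := ln Rth0.

Lemma DD_nonneg : 0 <= DD.
Proof. unfold DD. assert (0 <= INR m) by apply pos_INR. assert (0 <= INR n) by apply pos_INR. nra. Qed.

Lemma d_rng i j : (1 <= i <= m)%nat -> (1 <= j <= n)%nat -> 0 <= dij rb rw i j <= DD.
Proof.
  intros Hi Hj. unfold dij, DD.
  assert (0 <= INR i) by apply pos_INR. assert (0 <= INR j) by apply pos_INR.
  assert (INR i <= INR m) by (apply le_INR; lia). assert (INR j <= INR n) by (apply le_INR; lia).
  split; nra.
Qed.

Lemma term_pos (R d : R) : DD < R -> 0 <= d <= DD -> 0 < 1 - d / R <= 1.
Proof.
  intros HR Hd. assert (HDn := DD_nonneg). assert (0 < R) by lra.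
  assert (d / R <= DD / R) by (apply Rmult_le_compat_r; [apply Rlt_le, Rinv_0_lt_compat|]; lra).
  assert (DD / R < 1) by (apply (Rmult_lt_reg_r R); [lra|]; field_simplify; lra).
  assert (0 <= d / R) by (apply Rmult_le_pos; [lra|apply Rlt_le, Rinv_0_lt_compat; lra]).
  lra.
Qed.

Lemma ff_eq (R : R) : DD < R -> ln (ff R) = c0 - avg2 m n (fun i j => ln (1 - dij rb rw i j / R)).
Proof. intros _. unfold ff, stmc_step, c0. rewrite ln_exp. reflexivity. Qed.

Lemma ff_ge (R : R) : DD < R -> Rth0 <= ff R.
Proof.
  intros HR. unfold ff, stmc_step.
  assert (avg2 m n (fun i j => ln (1 - dij rb rw i j / R)) <= avg2 m n (fun _ _ => 0)).
  { apply (avg2_le m n hm hn). intros i j Hi Hj. destruct (term_pos R (dij rb rw i j) HR (d_rng i j Hi Hj)).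
    rewrite <- ln_1. apply ln_le; lra. }
  rewrite (avg2_const m n hm hn) in H.
  rewrite <- (exp_ln Rth0) at 1 by lra. apply exp_le'. lra.
Qed.

Lemma ff_anti (R R' : R) : DD < R -> R <= R' -> ff R' <= ff R.
Proof.
  intros HR HRR. unfold ff, stmc_step. apply exp_le'.
  assert (avg2 m n (fun i j => ln (1 - dij rb rw i j / R)) <= avg2 m n (fun i j => ln (1 - dij rb rw i j / R'))).
  { apply (avg2_le m n hm hn). intros i j Hi Hj. assert (Hd := d_rng i j Hi Hj).
    destruct (term_pos R (dij rb rw i j) HR Hd).
    apply ln_le; [lra|].
    assert (HDn := DD_nonneg).
    assert (/ R' <= / R) by (apply Rinv_le_contravar; lra).
    unfold Rdiv. assert (dij rb rw i j * / R' <= dij rb rw i j * / R) by (apply Rmult_le_compat_l; lra).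
    lra. }
  lra.
Qed.

Lemma ff_lim (v : nat -> R) (A : R) : DD < A -> is_lim_seq v A -> is_lim_seq (fun l => ff (v l)) (ff A).
Proof.
  intros HA Hv. unfold ff, stmc_step.
  apply (is_lim_seq_continuous exp (fun l => ln Rth0 - avg2 m n (fun i j => ln (1 - dij rb rw i j / v l)))).
  { apply (cont_of_deriv _ _ (exp (ln Rth0 - avg2 m n (fun i j => ln (1 - dij rb rw i j / A))))).
    apply is_derive_Reals, derivable_pt_lim_exp. }
  apply is_lim_seq_minus'. apply is_lim_seq_const.
  apply (avg2_lim m n (fun l i j => ln (1 - dij rb rw i j / v l))).
  intros i j Hi Hj. assert (Hd := d_rng i j Hi Hj).
  destruct (term_pos A (dij rb rw i j) HA Hd).
  assert (HDn := DD_nonneg).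
  apply (is_lim_seq_continuous (fun R => ln (1 - dij rb rw i j / R)) v A); [|exact Hv].
  apply (cont_of_deriv _ _ ((dij rb rw i j / A^2) / (1 - dij rb rw i j / A))).
  assert (E : 1 + - (dij rb rw i j * / A) = 1 - dij rb rw i j / A) by (unfold Rdiv; ring).
  auto_derive. { rewrite E. repeat split; lra. }
  rewrite E. field. split; lra.
Qed.

Lemma no2cycle (A B : R) : Rth0 <= A -> A < B -> ff A = B -> ff B = A -> False.
Proof.
  intros HA0 HAB HfA HfB.
  assert (HDn := DD_nonneg).
  assert (HDR : DD < Rth0) by exact hR0d.
  assert (HA : DD < A) by lra. assert (HB : DD < B) by lra.
  assert (Apos : 0 < A) by lra. assert (Bpos : 0 < B) by lra.
  assert (E1 : ln B = c0 - avg2 m n (fun i j => ln (1 - dij rb rw i j / A))).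
  { rewrite <- HfA. apply ff_eq. exact HA. }
  assert (E2 : ln A = c0 - avg2 m n (fun i j => ln (1 - dij rb rw i j / B))).
  { rewrite <- HfB. apply ff_eq. exact HB. }
  set (al := avg2 m n (fun i j => ln (1 - dij rb rw i j / A))) in *.
  set (be := avg2 m n (fun i j => ln (1 - dij rb rw i j / B))) in *.
  assert (Hsum : 1 <= DD / A + DD / B).
  { destruct (Rle_lt_dec 1 (DD / A + DD / B)) as [h|h]; [exact h|exfalso].
    assert (Hlt : avg2 m n (fun i j => ln (1 - dij rb rw i j / B) + (-1) * ln (1 - dij rb rw i j / A))
                  < avg2 m n (fun _ _ => ln B - ln A)).
    { apply (avg2_lt m n hm hn). intros i j Hi Hj. assert (Hd := d_rng i j Hi Hj).
      set (d := dij rb rw i j) in *.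
      destruct (term_pos A d HA Hd). destruct (term_pos B d HB Hd).
      assert (d / A <= DD / A) by (apply Rmult_le_compat_r; [apply Rlt_le, Rinv_0_lt_compat|]; lra).
      assert (d / B <= DD / B) by (apply Rmult_le_compat_r; [apply Rlt_le, Rinv_0_lt_compat|]; lra).
      assert (key : (1 - d / A) * B - (1 - d / B) * A = (B - A) * (1 - (d / A + d / B))) by (field; lra).
      assert (0 < (B - A) * (1 - (d / A + d / B))) by (apply Rmult_lt_0_compat; lra).
      assert (Hm : ln ((1 - d / B) * A) < ln ((1 - d / A) * B)).
      { apply ln_increasing; [apply Rmult_lt_0_compat|]; lra. }
      rewrite !ln_mult in Hm by lra. lra. }
    rewrite (avg2_plus m n), (avg2_scal m n), (avg2_const m n hm hn) in Hlt.
    fold al be in Hlt. lra. }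
  assert (Dpos : 0 < DD).
  { destruct HDn as [h|h]; [exact h|]. rewrite <- h in Hsum. unfold Rdiv in Hsum. lra. }
  set (aD := ln (1 - DD / A)). set (bD := ln (1 - DD / B)).
  assert (Hch : avg2 m n (fun i j => bD * ln (1 - dij rb rw i j / A))
             <= avg2 m n (fun i j => aD * ln (1 - dij rb rw i j / B))).
  { apply (avg2_le m n hm hn). intros i j Hi Hj. assert (Hd := d_rng i j Hi Hj).
    assert (Hi1 : / B < / A) by (apply Rinv_lt_contravar; nra).
    assert (Hi2 : 0 < / B) by (apply Rinv_0_lt_compat; lra).
    assert (HDy : DD * / A < 1).
    { apply (Rmult_lt_reg_r A); [lra|]. rewrite Rmult_assoc, Rinv_l by lra. lra. }
    assert (HC := C2 (/ B) (/ A) (dij rb rw i j) DD Hi2 Hi1 (proj1 Hd) (proj2 Hd) HDy).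
    unfold aD, bD, Rdiv. lra. }
  rewrite !(avg2_scal m n) in Hch. fold al be in Hch.
  set (X := DD / B) in *. set (Y := DD / A) in *.
  assert (HX : 0 < X) by (apply Rdiv_lt_0_compat; lra).
  assert (HXY : X < Y).
  { unfold X, Y. unfold Rdiv. apply Rmult_lt_compat_l; [lra|]. apply Rinv_lt_contravar; nra. }
  assert (HY1 : Y < 1).
  { unfold Y. apply (Rmult_lt_reg_r A); [lra|]. field_simplify; lra. }
  assert (LX : ln X = ln DD - ln B) by (unfold X; apply ln_div; lra).
  assert (LY : ln Y = ln DD - ln A) by (unfold Y; apply ln_div; lra).
  assert (Heta : ln DD < c0) by (unfold c0; apply ln_increasing; lra).
  set (eta := c0 - ln DD).
  assert (Hb : c0 - ln B = eta + ln X) by (unfold eta; lra).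
  assert (Ha : c0 - ln A = eta + ln Y) by (unfold eta; lra).
  assert (Hal : al = eta + ln X) by lra.
  assert (Hbe : be = eta + ln Y) by lra.
  rewrite Hal, Hbe in Hch.
  assert (Hell : ln Y * ln (1 - Y) <= ln X * ln (1 - X)).
  { destruct (Rle_lt_dec (1/2) X) as [h|h].
    - apply C4; lra.
    - assert (H := C4 (1 - X) Y ltac:(lra) ltac:(lra) ltac:(lra)).
      replace (1 - (1 - X)) with X in H by ring. lra. }
  assert (Hln : ln (1 - Y) < ln (1 - X)) by (apply ln_increasing; lra).
  assert (0 < (c0 - ln DD) * (ln (1 - X) - ln (1 - Y))) by (apply Rmult_lt_0_compat; lra).
  unfold aD, bD in Hch. fold eta in H.
  assert (E3 : bD = ln (1 - X)) by reflexivity.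
  lra.
Qed.

End Main.

Theorem lemma1 (m n : nat) (rb rw Rth0 : R)
  (hm : (1 <= m)%nat) (hn : (1 <= n)%nat)
  (hrb : 0 <= rb) (hrw : 0 <= rw)
  (hR0 : 0 < Rth0) (hR0d : INR m * rb + INR n * rw < Rth0) :
  (forall l : nat, INR m * rb + INR n * rw < stmc_seq m n rb rw Rth0 l) /\
  exists Rarr : R,
    INR m * rb + INR n * rw < Rarr /\
    ln Rth0 = avg2 m n (fun i j => ln (Rarr - dij rb rw i j)) /\
    is_lim_seq (stmc_seq m n rb rw Rth0) Rarr.
Proof.
  set (u := stmc_seq m n rb rw Rth0).
  set (f := ff m n rb rw Rth0).
  assert (HD : DD m n rb rw < Rth0) by exact hR0d.
  assert (uS : forall l, u (S l) = f (u l)) by reflexivity.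
  assert (u_ge : forall l, Rth0 <= u l).
  { induction l as [|l IH]. unfold u; simpl; lra. rewrite uS.
    apply (ff_ge m n rb rw Rth0 hm hn hrb hrw hR0). lra. }
  assert (u_gt : forall l, DD m n rb rw < u l) by (intros l; specialize (u_ge l); lra).
  split. { intros l. exact (u_gt l). }
  assert (u_le : forall l, u l <= u 1%nat).
  { intros [|l]. change (Rth0 <= f Rth0). apply (ff_ge m n rb rw Rth0 hm hn hrb hrw hR0). exact HD.
    rewrite uS. change (u 1%nat) with (f Rth0). apply (ff_anti m n rb rw Rth0 hm hn hrb hrw); [exact HD|apply u_ge]. }
  assert (anti : forall a b, Rth0 <= a -> a <= b -> f b <= f a).
  { intros a b Ha Hab. apply (ff_anti m n rb rw Rth0 hm hn hrb hrw); lra. }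
  assert (Q : forall k, u (2 * k)%nat <= u (S (S (2 * k))) /\ u (S (S (S (2 * k)))) <= u (S (2 * k))).
  { induction k as [|k [IH1 IH2]].
    - assert (H0 : u (2 * 0)%nat <= u (S (S (2 * 0)))).
      { apply (Rle_trans _ Rth0). unfold u; simpl; lra. apply u_ge. }
      split. exact H0.
      rewrite (uS (S (S (2 * 0)))), (uS (2 * 0)%nat). apply anti. apply u_ge. exact H0.
    - replace (2 * S k)%nat with (S (S (2 * k))) by lia.
      assert (H1 : u (S (S (2 * k))) <= u (S (S (S (S (2 * k)))))).
      { rewrite (uS (S (S (S (2 * k))))). rewrite (uS (S (2*k))). apply anti; [apply u_ge|exact IH2]. }
      split. exact H1.
      rewrite (uS (S (S (S (S (2 * k)))))). rewrite (uS (S (S (2*k)))). apply anti; [apply u_ge|exact H1]. }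
  set (v := fun k => u (2 * k)%nat). set (w := fun k => u (S (2 * k))).
  assert (vS : forall k, v (S k) = u (S (S (2 * k)))).
  { intros k. unfold v. f_equal. lia. }
  destruct (ex_finite_lim_seq_incr v (u 1%nat)) as [A HA].
  { intros k. rewrite vS. apply Q. } { intros k. apply u_le. }
  destruct (ex_finite_lim_seq_decr w Rth0) as [B HB].
  { intros k. unfold w. replace (2 * S k)%nat with (S (S (2 * k))) by lia. apply Q. }
  { intros k. apply u_ge. }
  assert (HA0 : Rth0 <= A).
  { assert (H := is_lim_seq_le (fun _ => Rth0) v Rth0 A (fun k => u_ge _) (is_lim_seq_const _) HA).
    simpl in H. exact H. }
  assert (HB0 : Rth0 <= B).
  { assert (H := is_lim_seq_le (fun _ => Rth0) w Rth0 B (fun k => u_ge _) (is_lim_seq_const _) HB).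
    simpl in H. exact H. }
  assert (fA : f A = B).
  { assert (H := ff_lim m n rb rw Rth0 hm hn hrb hrw v A ltac:(lra) HA).
    assert (H' : is_lim_seq w (f A)).
    { apply (is_lim_seq_ext (fun l => ff m n rb rw Rth0 (v l))); [intros; reflexivity|exact H]. }
    apply is_lim_seq_unique in H'. apply is_lim_seq_unique in HB. rewrite HB in H'.
    injection H'. auto. }
  assert (fB : f B = A).
  { assert (H := ff_lim m n rb rw Rth0 hm hn hrb hrw w B ltac:(lra) HB).
    assert (H' : is_lim_seq (fun k => v (S k)) (f B)).
    { apply (is_lim_seq_ext (fun l => ff m n rb rw Rth0 (w l))); [|exact H].
      intros k. rewrite vS. reflexivity. }
    apply is_lim_seq_incr_1 in H'. apply is_lim_seq_unique in H'. apply is_lim_seq_unique in HA.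
    rewrite HA in H'. injection H'. auto. }
  assert (AB : A = B).
  { destruct (Rtotal_order A B) as [h|[h|h]]; [exfalso|exact h|exfalso].
    - exact (no2cycle m n rb rw Rth0 hm hn hrb hrw hR0 hR0d A B HA0 h fA fB).
    - exact (no2cycle m n rb rw Rth0 hm hn hrb hrw hR0 hR0d B A HB0 h fB fA). }
  rewrite <- AB in fA, fB, HB, HB0.
  exists A. split; [lra|]. split.
  - assert (HAD : DD m n rb rw < A) by lra.
    assert (E := ff_eq m n rb rw Rth0 A HAD). fold f in E. rewrite fA in E.
    assert (HDn := DD_nonneg m n rb rw hrb hrw).
    rewrite (avg2_ext m n hm hn (fun i j => ln (A - dij rb rw i j)) (fun i j => ln A + ln (1 - dij rb rw i j / A))).
    + rewrite (avg2_plus m n), (avg2_const m n hm hn). unfold c0 in E. lra.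
    + intros i j Hi Hj. assert (Hd := d_rng m n rb rw hm hn hrb hrw i j Hi Hj).
      destruct (term_pos m n rb rw hrb hrw A _ HAD Hd).
      rewrite <- ln_mult by lra. f_equal. field. lra.
  - apply is_lim_seq_spec. intros eps.
    apply is_lim_seq_spec in HA. apply is_lim_seq_spec in HB.
    destruct (HA eps) as [N1 H1]. destruct (HB eps) as [N2 H2].
    exists (2 * (N1 + N2))%nat. intros l Hl.
    destruct (Nat.Even_or_Odd l) as [[k Hk]|[k Hk]]; subst l.
    + apply (H1 k). lia.
    + replace (2 * k + 1)%nat with (S (2 * k)) by lia. apply (H2 k). lia.
Qed.
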